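(* In the setting described in the context, if either ($0<v_0<1$ and $\omega_0>-\frac{\nu}{2}f_0(v_0)$) or ($v_0>1$ and $\omega_0<-\frac{\nu}{2}f_0(v_0)$), then type A blowup occurs.
   Context: Fix $\nu>0$, $v_0>0$ with $v_0\neq1$, and $\omega_0\in\mathbb{R}$. Consider the real ODE system $\frac{d\omega_{-2,i}}{dt}=\omega_{-2,i}^2\frac{1-2v_c^2+5v_c^4}{4v_c^2(1-v_c^2)^2}-\nu\omega_{-2,i}$, $\frac{dv_c}{dt}=-\omega_{-2,i}\frac{1+v_c^2}{4v_c(1-v_c^2)}$ with $v_c(0)=v_0$, $\omega_{-2,i}(0)=\omega_0$; its solution (continued through $v_c=1$) is characterized as follows. Let $F(v)=\frac{v(v^2-1)}{(v^2+1)^2}+\arctan v$, which is a strictly increasing bijection from $(0,\infty)$ onto $(0,\pi/2)$, and let $G(t)=F(v_0)+\frac{2\omega_0 v_0(1-e^{-\nu t})}{\nu(v_0^2-1)(v_0^2+1)^2}$. Then $v_c(t)$ is defined by $F(v_c(t))=G(t)$ for as long as $G(t)\in(0,\pi/2)$, and $\omega_{-2,i}(t)=\omega_0e^{-\nu t}\frac{v_0}{v_c(t)}\frac{v_c(t)^2-1}{v_0^2-1}\left(\frac{v_c(t)^2+1}{v_0^2+1}\right)^2$. Type A blowup means: there is a finite $t_c>0$ with $v_c(t)>0$ on $[0,t_c)$ and $v_c(t)\to0^+$ as $t\to t_c^-$. Type B blowup means: there is a finite $t_c>0$ with $v_c(t)\in(0,\infty)$ on $[0,t_c)$ and $v_c(t)\to+\infty$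 as $t\to t_c^-$. Here $f_0(x)=(x^2-1)^2+\frac{(x^2+1)^2}{x}(x^2-1)\arctan(x)$ and $f_\infty(x)=(x^2-1)^2+\frac{(x^2+1)^2}{x}(x^2-1)\left(\arctan(x)-\frac{\pi}{2}\right)$ for $x>0$. *)

(* Defs.v *)
From Stdlib Require Import Reals.
From Coquelicot Require Import Coquelicot.
Open Scope R_scope.

Definition Fc (v : R) : R := v * (v ^ 2 - 1) / (v ^ 2 + 1) ^ 2 + atan v.

Definition Gc (nu v0 w0 t : R) : R :=
  Fc v0 + 2 * w0 * v0 * (1 - exp (- nu * t)) / (nu * (v0 ^ 2 - 1) * (v0 ^ 2 + 1) ^ 2).

Definition f0 (x : R) : R :=
  (x ^ 2 - 1) ^ 2 + (x ^ 2 + 1) ^ 2 / x * (x ^ 2 - 1) * atan x.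

Definition finf (x : R) : R :=
  (x ^ 2 - 1) ^ 2 + (x ^ 2 + 1) ^ 2 / x * (x ^ 2 - 1) * (atan x - PI / 2).

(* Type A blowup: there is a finite t_c > 0 such that v_c(t) (the positive
   solution of F(v_c(t)) = G(t), unique since F is strictly increasing on
   (0,oo)) is defined and positive on [0,t_c) and v_c(t) -> 0+ as t -> t_c-. *)
Definition typeA_blowup (nu v0 w0 : R) : Prop :=
  exists tc : R, 0 < tc /\
    exists vc : R -> R,
      (forall t, 0 <= t < tc -> 0 < vc t /\ Fc (vc t) = Gc nu v0 w0 t) /\
      filterlim vc (at_left tc) (locally 0).

(* Main.v *)
Require Import Defs.
From Stdlib Require Import Reals Lra Psatz ClassicalEpsilon.
From Coquelicot Require Import Coquelicot.
Open Scope R_scope.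
Lemma Fc_deriv x : is_derive Fc x (8 * x ^ 2 / (x ^ 2 + 1) ^ 3).
Proof.
  unfold Fc. assert (H : x^2+1 <> 0) by nra.
  auto_derive.
  - repeat split; auto. 
  - field. auto.
Qed.

Lemma Fc_cont : continuity Fc.
Proof.
  intro x. apply derivable_continuous_pt.
  exists (8 * x ^ 2 / (x ^ 2 + 1) ^ 3). apply is_derive_Reals, Fc_deriv.
Qed.

Lemma Fc_incr a b : 0 <= a -> a < b -> Fc a < Fc b.
Proof.
  intros Ha Hab.
  destruct (MVT_cor2 Fc (fun x => 8 * x ^ 2 / (x ^ 2 + 1) ^ 3) a b Hab)
    as [c [Hc1 Hc2]].
  { intros c _. apply is_derive_Reals, Fc_deriv. }
  assert (0 < 8 * c ^ 2 / (c ^ 2 + 1) ^ 3).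
  { apply Rdiv_lt_0_compat; [nra|]. apply pow_lt. nra. }
  nra.
Qed.

Lemma Fc0 : Fc 0 = 0.
Proof. unfold Fc. rewrite atan_0. field. Qed.

Lemma Fc_pre y v0 : 0 < v0 -> 0 < y <= Fc v0 -> {v | 0 < v <= v0 /\ Fc v = y}.
Proof.
  intros Hv Hy.
  destruct (Req_EM_T (Fc v0) y) as [E|E].
  { exists v0. split; [lra|auto]. }
  destruct (IVT (fun x => Fc x - y) 0 v0) as [z [Hz1 Hz2]].
  - intro x. apply continuity_pt_minus; [apply Fc_cont | apply continuity_pt_const; intros ? ?; auto].
  - auto.
  - rewrite Fc0; lra.
  - lra.
  - exists z. destruct (Req_dec z 0) as [Z|Z].
    + subst. rewrite Fc0 in Hz2. lra.
    + split; [lra|lra].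
Qed.
Theorem lemma3p5 (nu v0 w0 : R) :
  0 < nu -> 0 < v0 -> v0 <> 1 ->
  ((0 < v0 < 1 /\ w0 > - (nu / 2) * f0 v0) \/
   (v0 > 1 /\ w0 < - (nu / 2) * f0 v0)) ->
  typeA_blowup nu v0 w0.
Proof.
  intros Hnu Hv0 Hv1 Hcase.
  set (D := nu * (v0 ^ 2 - 1) * (v0 ^ 2 + 1) ^ 2).
  assert (HD : D <> 0).
  { unfold D. assert (v0^2-1 <> 0).
    { intro E. apply Hv1. nra. }
    assert (0 < (v0^2+1)^2) by (apply pow_lt; nra).
    apply Rmult_integral_contrapositive_currified; [|lra].
    apply Rmult_integral_contrapositive_currified; lra. }
  set (F0 := Fc v0).
  set (c := 2 * w0 * v0 / D).
  assert (HG : forall t, Gc nu v0 w0 t = F0 + c * (1 - exp (- nu * t))).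
  { intro t. unfold Gc, F0, c. fold D. field. auto. }
  assert (Hkey : F0 + c = v0 * (nu * f0 v0 + 2 * w0) / D).
  { assert (v0^2-1 <> 0) by (intro E; apply HD; unfold D; rewrite E; ring).
    unfold F0, c, Fc, f0, D. field. repeat split; lra || nra. }
  assert (Hneg : F0 + c < 0).
  { rewrite Hkey. unfold Rdiv.
    destruct Hcase as [[H1 H2]|[H1 H2]].
    - assert (D < 0).
      { unfold D. assert (0 < (v0^2+1)^2) by (apply pow_lt; nra).
        assert (v0^2 - 1 < 0) by nra. 
        assert (nu * (v0^2-1) < 0) by nra. nra. }
      assert (/ D < 0) by (apply Rinv_lt_0_compat; auto).
      assert (0 < v0 * (nu * f0 v0 + 2 * w0)) by nra. nra.
    - assert (0 < D).
      { unfold D. assert (0 < (v0^2+1)^2) by (apply pow_lt; nra).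
        assert (v0^2 - 1 > 0) by nra.
        assert (nu * (v0^2-1) > 0) by nra. nra. }
      assert (/ D > 0) by (apply Rinv_0_lt_compat; auto).
      assert (v0 * (nu * f0 v0 + 2 * w0) < 0) by nra. nra. }
  assert (HF0 : 0 < F0).
  { unfold F0. rewrite <- Fc0. apply Fc_incr; lra. }
  assert (Hc : c < 0) by lra.
  set (r := 1 + F0 / c).
  assert (Hr : 0 < r < 1).
  { unfold r. assert (F0 / c < 0).
    { unfold Rdiv. assert (/ c < 0) by (apply Rinv_lt_0_compat; auto). nra. }
    assert (F0 / c > -1).
    { apply (Rmult_lt_reg_r (-c)); [lra|].
      replace (F0 / c * - c) with (- F0) by (field; lra). lra. }
    lra. }
  set (tc := - ln r / nu).
  assert (Htc : 0 < tc).
  { unfold tc. assert (ln r < 0).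
    { rewrite <- ln_1. apply ln_increasing; lra. }
    apply Rdiv_lt_0_compat; lra. }
  assert (Hetc : exp (- nu * tc) = r).
  { unfold tc. replace (- nu * (- ln r / nu)) with (ln r) by (field; lra).
    apply exp_ln; lra. }
  assert (Hcr : c * r = c + F0) by (unfold r; field; lra).
  assert (Hbnd : forall t, 0 <= t < tc -> 0 < Gc nu v0 w0 t <= F0).
  { intros t Ht. rewrite HG.
    assert (exp (- nu * t) > r).
    { rewrite <- Hetc. apply exp_increasing. nra. }
    assert (exp (- nu * t) <= 1).
    { rewrite <- exp_0. destruct (Req_dec t 0) as [->|Hn].
      - rewrite Rmult_0_r. lra.
      - left. apply exp_increasing. nra. }
    split; nra. }
  assert (HGtc : Gc nu v0 w0 tc = 0).
  { rewrite HG, Hetc. nra. }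
  set (vc := fun t => epsilon (inhabits 0)
                 (fun v => 0 < v <= v0 /\ Fc v = Gc nu v0 w0 t)).
  assert (Hvc : forall t, 0 <= t < tc -> 0 < vc t <= v0 /\ Fc (vc t) = Gc nu v0 w0 t).
  { intros t Ht. unfold vc. apply epsilon_spec.
    destruct (Fc_pre (Gc nu v0 w0 t) v0 Hv0 (Hbnd t Ht)) as [v Hv].
    exists v. exact Hv. }
  exists tc. split; [exact Htc|]. exists vc. split.
  { intros t Ht. destruct (Hvc t Ht) as [[A B] C]. split; auto. }
  apply filterlim_locally. intro eps.
  assert (Hfe : 0 < Fc (eps / 2)).
  { rewrite <- Fc0. apply Fc_incr; [lra|]. destruct eps; simpl; lra. }
  assert (Hcont : filterlim (Gc nu v0 w0) (locally tc) (locally (Gc nu v0 w0 tc))).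
  { apply (@ex_derive_continuous R_AbsRing R_NormedModule). unfold Gc, Fc. auto_derive. auto. }
  apply (proj1 (filterlim_locally _ _)) with (eps := mkposreal _ Hfe) in Hcont.
  rewrite HGtc in Hcont.
  assert (Hpos : locally tc (fun t => 0 <= t)).
  { exists (mkposreal _ Htc). intros t Ht. simpl in Ht.
    unfold ball in Ht; simpl in Ht; unfold AbsRing_ball, abs, minus, plus, opp in Ht; simpl in Ht.
    apply Rabs_lt_between in Ht. lra. }
  unfold at_left, within.
  generalize (filter_and _ _ Hcont Hpos). apply filter_imp.
  intros t [H1 H2] Hlt.
  destruct (Hvc t (conj H2 Hlt)) as [[A B] C].
  unfold ball in H1 |- *; simpl in H1 |- *; unfold AbsRing_ball, abs, minus, plus, opp in H1 |- *; simpl in H1 |- *.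
  apply Rabs_lt_between in H1.
  assert (vc t < eps / 2).
  { destruct (Rlt_le_dec (vc t) (eps / 2)) as [L|L]; auto.
    destruct L as [L|L].
    - assert (Fc (eps/2) < Fc (vc t)) by (apply Fc_incr; auto; destruct eps; simpl; lra).
      lra.
    - rewrite <- L in C. lra. }
  apply Rabs_lt_between. destruct eps; simpl in *; lra.
Qed.
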